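(* Let $\mathcal{D}$ be a distribution over $\mathcal{X}\times\mathcal{Y}$ where $\mathcal{Y}\subseteq\mathbb{R}^d$ and $\|y\|_\infty\le M$ for all $y\in\mathcal{Y}$, let $\alpha>0$, and let $\mathcal{T}$ be a bucketing with width $w=\sqrt{\alpha/M}$. Let $\pi:\mathcal{X}\to\Omega$ be an arbitrary policy and let $h:\mathcal{X}\to\mathcal{Y}$ be a model that is $\alpha$-consistent with respect to $\pi$. Then \[\left|\mathbb{E}_{\mathcal{D}}[\pi(x)\cdot h(x)]-\mathbb{E}_{\mathcal{D}}[\pi(x)\cdot y]\right|\le 2d\sqrt{\alpha M}.\]
   Context: $\Omega\subseteq[0,1]^d$ is an arbitrary (not necessarily convex) feasible set of actions; a policy is a map $\pi:\mathcal{X}\to\Omega$; a model is a map $h:\mathcal{X}\to\mathcal{Y}$. A bucketing $\mathcal{T}$ of width $w$ is a partition of $[0,1]$ into $1/w$ consecutive intervals (''buckets'') $\tau$ of width $w$. A model $h$ is $\alpha$-consistent with respect to a collection of sets $\mathcal{C}\subseteq 2^{\mathcal{X}}$ if for every $C\in\mathcal{C}$, $\|\mathbb{E}_{\mathcal{D}}[y-h(x)\mid x\in C]\|_\infty\le \alpha/\Pr[x\in C]$. The level sets of a policy $\pi$ are $\mathcal{C}^{\mathcal{T}}_\pi=\{\{x:\pi(x)_i\in\tau\}: i\in[d],\tau\in\mathcal{T}\}$. A model $h$ is $\alpha$-consistent with respect to a policy $\pi$ if it is $\alpha$-consistent with respect to $\mathcal{C}^{\mathcal{T}}_\pi$. 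*)

(* Defs.v *)
From HB Require Import structures.
From mathcomp Require Import all_boot all_order all_algebra.
From mathcomp Require Import all_classical all_reals all_analysis.
Set Implicit Arguments. Unset Strict Implicit. Unset Printing Implicit Defensive.
Import Order.TTheory GRing.Theory Num.Theory.
Import numFieldNormedType.Exports.
Local Open Scope classical_set_scope.
Local Open Scope ring_scope.

(* A bucketing of width w of [0,1]: n = 1/w consecutive intervals tau_k
   (k < n) of width w, tau_k lying between k*w and (k+1)*w (endpoint
   conventions left arbitrary), pairwise disjoint and covering [0,1]. *)
Definition is_bucketing (R : realType) (w : R) (n : nat) (tau : 'I_n -> set R) :
  Prop :=
  [/\ n%:R * w = 1,
      (forall k : 'I_n,
          [set u | k%:R * w < u < k.+1%:R * w] `<=` tau k /\
          tau k `<=` [set u | k%:R * w <= u <= k.+1%:R * w]),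
      (forall k l : 'I_n, k != l -> tau k `&` tau l = set0) &
      \bigcup_(k in [set: 'I_n]) tau k = [set u | 0 <= u <= 1]].

Definition level_sets (R : realType) (X : Type) (d n : nat)
  (tau : 'I_n -> set R) (pi : X -> 'rV[R]_d) : set (set X) :=
  [set C | exists (i : 'I_d) (k : 'I_n), C = [set x | tau k (pi x 0 i)]].

Definition cond_exp (R : realType) (dT : measure_display) (T : measurableType dT)
  (P : probability T R) (A : set T) (f : T -> R) : R :=
  fine (\int[P]_(t in A) (f t)%:E) / fine (P A).

(* (x,y) ~ D is modelled as a pair of random variables xf, yf on the
   probability space (T, P).  h is alpha-consistent w.r.t. the collection Cs:
   for every C in Cs, || E[y - h(x) | x in C] ||_inf <= alpha / Pr[x in C]. *)
Definition alpha_consistent (R : realType) (dT : measure_display)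
  (T : measurableType dT) (P : probability T R) (X : Type) (d : nat)
  (xf : T -> X) (yf : T -> 'rV[R]_d) (h : X -> 'rV[R]_d) (alpha : R)
  (Cs : set (set X)) : Prop :=
  forall C, Cs C -> forall i : 'I_d,
    `| cond_exp P (xf @^-1` C) (fun t => yf t 0 i - h (xf t) 0 i) |
      <= alpha / fine (P (xf @^-1` C)).

Definition dotv (R : realType) (d : nat) (u v : 'rV[R]_d) : R :=
  \sum_(i < d) u 0 i * v 0 i.

(* Main.v *)
Require Import Defs.
From HB Require Import structures.
From mathcomp Require Import all_boot all_order all_algebra.
From mathcomp Require Import all_classical all_reals all_analysis.
From mathcomp Require Import ring lra.
Set Implicit Arguments. Unset Strict Implicit.
Import Order.TTheory GRing.Theory Num.Theory.
Import numFieldNormedType.Exports.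
Local Open Scope classical_set_scope.
Local Open Scope ring_scope.

Definition goodf (R : realType) (dT : measure_display) (T : measurableType dT)
  (f : T -> R) : Prop :=
  measurable_fun setT f /\ exists B : R, forall t, `|f t| <= B.

Lemma good_ext (R : realType) (dT : measure_display) (T : measurableType dT)
  (f g : T -> R) : (forall t, f t = g t) -> goodf f -> goodf g.
Proof. by move=> fg; have -> : f = g by apply/funext. Qed.

Lemma good_cst (R : realType) (dT : measure_display) (T : measurableType dT)
  (c : R) : goodf (fun _ : T => c).
Proof. split; first exact: measurable_cst. by exists `|c|. Qed.

Lemma good_indic (R : realType) (dT : measure_display) (T : measurableType dT)
  (A : set T) : measurable A -> goodf (fun t => \1_A t : R).
Proof.
move=> mA; split; first exact: measurable_realfun.measurable_indic.
exists 1 => t; rewrite indicE; case: (t \in A); rewrite ?normr1 ?normr0 //.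
Qed.

Lemma good_mul (R : realType) (dT : measure_display) (T : measurableType dT)
  (f g : T -> R) : goodf f -> goodf g -> goodf (fun t => f t * g t).
Proof.
move=> [mf [Bf hf]] [mg [Bg hg]]; split.
  exact: measurable_realfun.measurable_funM.
exists (`|Bf| * `|Bg|) => t; rewrite normrM.
apply: ler_pM => //; apply: le_trans (ler_norm _); [exact: hf|exact: hg].
Qed.

Lemma good_add (R : realType) (dT : measure_display) (T : measurableType dT)
  (f g : T -> R) : goodf f -> goodf g -> goodf (fun t => f t + g t).
Proof.
move=> [mf [Bf hf]] [mg [Bg hg]]; split.
  exact: measurable_realfun.measurable_funD.
exists (`|Bf| + `|Bg|) => t; apply: le_trans (ler_normD _ _) _.
apply: lerD; apply: le_trans (ler_norm _); [exact: hf|exact: hg].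
Qed.

Lemma good_sub (R : realType) (dT : measure_display) (T : measurableType dT)
  (f g : T -> R) : goodf f -> goodf g -> goodf (fun t => f t - g t).
Proof.
move=> hf hg; apply: (good_ext _ (good_add hf (good_mul (good_cst _ (-1)) hg))).
by move=> t /=; rewrite mulN1r.
Qed.

Lemma good_norm (R : realType) (dT : measure_display) (T : measurableType dT)
  (f : T -> R) : goodf f -> goodf (fun t => `|f t|).
Proof.
move=> [mf [Bf hf]]; split.
  exact: measurableT_comp (@measurable_realfun.normr_measurable R setT) mf.
by exists Bf => t; rewrite normr_id.
Qed.

Lemma good_sum (R : realType) (dT : measure_display) (T : measurableType dT)
  (I : Type) (s : seq I) (F : I -> T -> R) :
  (forall i, goodf (F i)) -> goodf (fun t => \sum_(i <- s) F i t).
Proof.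
move=> hF; elim: s => [|a s IH].
  by apply: (good_ext _ (good_cst _ 0)) => t; rewrite big_nil.
by apply: (good_ext _ (good_add (hF a) IH)) => t; rewrite big_cons.
Qed.

Lemma bint (R : realType) (dT : measure_display) (T : measurableType dT)
  (P : probability T R) (f : T -> R) : goodf f -> P.-integrable setT (EFin \o f).
Proof.
move=> [mf [B hB]].
apply: (le_integrable measurableT _ _ (finite_measure_integrable_cst P B measurableT)).
- exact/measurable_realfun.measurable_EFinP.
- by move=> t _ /=; rewrite lee_fin; exact: le_trans (hB t) (ler_norm _).
Qed.

Lemma Rint_EFin (R : realType) (dT : measure_display) (T : measurableType dT)
  (P : probability T R) (f : T -> R) : goodf f ->
  (\int[P]_t (f t)%:E)%E = (Rintegral P setT f)%:E.
Proof. by move=> hf; rewrite /Rintegral fineK //; exact: integrable_fin_num (bint P hf). Qed.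

Lemma Rint_sum (R : realType) (dT : measure_display) (T : measurableType dT)
  (P : probability T R) (I : Type) (s : seq I) (F : I -> T -> R) :
  (forall i, goodf (F i)) ->
  Rintegral P setT (fun t => \sum_(i <- s) F i t) = \sum_(i <- s) Rintegral P setT (F i).
Proof.
move=> hF; rewrite /Rintegral.
under eq_integral do rewrite -sumEFin.
rewrite (@integral_sum _ _ _ P setT measurableT I (fun i x => (F i x)%:E)); last first.
  by move=> i; exact: bint.
rewrite (eq_bigr (fun i => (Rintegral P setT (F i))%:E)); last first.
  by move=> i _; rewrite Rint_EFin.
by rewrite sumEFin.
Qed.

Lemma meas_I1 (R : realType) (S : set R) (a : R) : measurable (S `&` [set a]).
Proof.
have [Sa|nSa] := pselect (S a).
  rewrite (_ : S `&` [set a] = [set a]); first exact: measurable_set1.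
  by apply/seteqP; split => [u [] //|u ->].
rewrite (_ : S `&` [set a] = set0) //.
by apply/seteqP; split => [u [Su ua]|u //]; rewrite ua in Su.
Qed.

Lemma meas_sand (R : realType) (a b : R) (S : set R) :
  [set u | a < u < b] `<=` S -> S `<=` [set u | a <= u <= b] -> measurable S.
Proof.
move=> h1 h2.
have -> : S = [set u | a < u < b] `|` (S `&` [set a]) `|` (S `&` [set b]).
  apply/seteqP; split => u; last by move=> [[/h1|[]]|[]].
  move=> Su; have /andP[] := h2 u Su.
  rewrite !le_eqVlt => /orP[/eqP au|au] /orP[/eqP ub|ub].
  - by left; right; split.
  - by left; right; split.
  - by right; split.
  - by left; left; rewrite /= au ub.
apply: measurableU; first apply: measurableU.
- by rewrite -set_itvoo; exact: measurable_itv.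
- exact: meas_I1.
- exact: meas_I1.
Qed.
Lemma core (R : realType) (dT : measure_display) (T : measurableType dT)
  (P : probability T R) (n : nat) (tau : 'I_n -> set R) (w B alpha : R)
  (p g : T -> R) :
  0 < w -> n%:R * w = 1 ->
  (forall k : 'I_n, tau k `<=` [set u | k%:R * w <= u <= k.+1%:R * w]) ->
  (forall k l : 'I_n, k != l -> tau k `&` tau l = set0) ->
  (forall u, 0 <= u <= 1 -> exists k, tau k u) ->
  (forall k, measurable (tau k)) ->
  goodf p -> goodf g ->
  (forall t, 0 <= p t <= 1) -> (forall t, `|g t| <= B) ->
  (forall k, `|Rintegral P setT (fun t => g t * \1_(p @^-1` tau k) t)| <= alpha) ->
  `|Rintegral P setT (fun t => p t * g t)| <= n%:R * alpha + w / 2 * B.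
Proof.
move=> w0 nw hsub hdis hcov mtau gp gg p01 gB hcons.
have mA : forall k, measurable (p @^-1` tau k).
  by move=> k; rewrite -[_ @^-1` _]setTI; exact: (gp.1 measurableT _ (mtau k)).
have sum1 : forall t, exists k0, tau k0 (p t) /\
    forall F : 'I_n -> R, \sum_k F k * \1_(p @^-1` tau k) t = F k0.
  move=> t; have [k0 hk0] := hcov _ (p01 t); exists k0; split => // F.
  rewrite (bigD1 k0) //= indicE mem_set // mulr1 big1 ?addr0 // => k nk.
  rewrite indicE memNset ?mulr0 // => hk.
  suff : (set0 : set R) (p t) by [].
  by rewrite -(hdis _ _ nk); split.
pose c (k : 'I_n) := (k%:R + 2^-1) * w.
have c01 : forall k, 0 <= c k <= 1.
  move=> k; have hk : (k.+1)%:R <= n%:R :> R by rewrite ler_nat ltn_ord.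
  have := ler_wpM2r (ltW w0) hk; rewrite nw -natr1 => h.
  have k0 : 0 <= k%:R * w :> R by rewrite mulr_ge0 // ltW.
  rewrite /c; apply/andP; split; nra.
have dev : forall t k, tau k (p t) -> `|p t - c k| <= w / 2.
  move=> t k /hsub /andP[h1 h2]; rewrite -natr1 in h2.
  rewrite ler_norml /c; apply/andP; split; nra.
have eqpt : forall t, p t * g t =
    \sum_k c k * (g t * \1_(p @^-1` tau k) t) +
    \sum_k (p t - c k) * g t * \1_(p @^-1` tau k) t.
  move=> t; rewrite -big_split /=; have [k0 [_ hs]] := sum1 t.
  rewrite (eq_bigr (fun k => (p t * g t) * \1_(p @^-1` tau k) t)).
    by rewrite (hs (fun _ => p t * g t)).
  by move=> k _; ring.
have g1 : forall k, goodf (fun t => c k * (g t * \1_(p @^-1` tau k) t)).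
  by move=> k; apply: good_mul; [exact: good_cst|apply: good_mul => //; exact: good_indic].
have g2 : forall k, goodf (fun t => (p t - c k) * g t * \1_(p @^-1` tau k) t).
  move=> k; apply: good_mul; last exact: good_indic.
  by apply: good_mul => //; apply: good_sub => //; exact: good_cst.
have G1 := good_sum (index_enum 'I_n) g1.
have G2 := good_sum (index_enum 'I_n) g2.
rewrite (eq_Rintegral _ (g := fun t => \sum_k c k * (g t * \1_(p @^-1` tau k) t) +
    \sum_k (p t - c k) * g t * \1_(p @^-1` tau k) t)); last by move=> t _; exact: eqpt.
rewrite RintegralD //; [|exact: bint|exact: bint].
apply: le_trans (ler_normD _ _) _; apply: lerD.
  rewrite Rint_sum //.
  apply: le_trans (ler_norm_sum _ _ _) _.
  rewrite [leRHS](_ : _ = \sum_(k < n) alpha); last first.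
    by rewrite sumr_const card_ord mulr_natl.
  apply: ler_sum => k _.
  rewrite RintegralZl //; last first.
    by apply: bint; apply: good_mul => //; exact: good_indic.
  rewrite normrM -[leRHS]mul1r; apply: ler_pM => //.
  by have /andP[h0 h1] := c01 k; rewrite ger0_norm.
apply: le_trans (le_normr_Rintegral measurableT (bint P G2)) _.
apply: le_trans (le_Rintegral (f2 := fun _ => w / 2 * B) measurableT _ _ _) _.
- exact/bint/good_norm.
- exact/bint/good_cst.
- move=> t _; have [k0 [hk hs]] := sum1 t.
  rewrite (hs (fun k => (p t - c k) * g t)) normrM.
  by apply: ler_pM => //; exact: dev.
rewrite Rintegral_cst //; set z := fine _; have -> : z = 1 by rewrite /z; move: (probability_setT P) => /= ->.
by rewrite mulr1.
Qed.
Theorem lemma3 (R : realType) (dT : measure_display) (T : measurableType dT)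
  (P : probability T R) (X : Type) (d : nat)
  (xf : T -> X) (yf : T -> 'rV[R]_d)
  (Y Omega : set 'rV[R]_d) (M alpha : R) (n : nat) (tau : 'I_n -> set R)
  (pi h : X -> 'rV[R]_d) :
  (forall v, Y v -> forall i : 'I_d, `|v 0 i| <= M) ->
  (forall t, Y (yf t)) ->
  (forall v, Omega v -> forall i : 'I_d, 0 <= v 0 i <= 1) ->
  (forall x, Omega (pi x)) ->
  (forall x, Y (h x)) ->
  0 < M -> 0 < alpha ->
  is_bucketing (Num.sqrt (alpha / M)) tau ->
  (forall i : 'I_d, measurable_fun setT (fun t => pi (xf t) 0 i)) ->
  (forall i : 'I_d, measurable_fun setT (fun t => h (xf t) 0 i)) ->
  (forall i : 'I_d, measurable_fun setT (fun t => yf t 0 i)) ->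
  alpha_consistent P xf yf h alpha (level_sets tau pi) ->
  (`| \int[P]_t (dotv (pi (xf t)) (h (xf t)))%:E
      - \int[P]_t (dotv (pi (xf t)) (yf t))%:E |
    <= (2 * d%:R * Num.sqrt (alpha * M))%:E)%E.
Proof.
move=> hY hyf hOm hpi hh M0 a0 [hnw hsand hdis hcov] mp mh my hcons.
set w := Num.sqrt (alpha / M) in hnw hsand.
have w0 : 0 < w by rewrite sqrtr_gt0 divr_gt0.
have mtau : forall k, measurable (tau k).
  by move=> k; exact: (meas_sand (hsand k).1 (hsand k).2).
have cov : forall u : R, 0 <= u <= 1 -> exists k, tau k u.
  move=> u hu; have : [set u : R | 0 <= u <= 1] u by [].
  by rewrite -hcov => -[k _ hk]; exists k.
have gp : forall i, goodf (fun t => pi (xf t) 0 i).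
  move=> i; split => //; exists 1 => t.
  by have /andP[h0 h1] := hOm _ (hpi (xf t)) i; rewrite ger0_norm.
have gh : forall i, goodf (fun t => h (xf t) 0 i).
  by move=> i; split => //; exists M => t; exact: hY.
have gy : forall i, goodf (fun t => yf t 0 i).
  by move=> i; split => //; exists M => t; exact: hY.
have e1 : Num.sqrt (alpha * M) = w * M.
  have -> : alpha * M = alpha / M * M ^+ 2 by rewrite expr2 mulrA divfK // gt_eqF.
  rewrite sqrtrM; last by rewrite divr_ge0 // ltW.
  by rewrite sqrtr_sqr ger0_norm // ltW.
have e2 : n%:R * alpha = w * M.
  have -> : alpha = w ^+ 2 * M by rewrite /w sqr_sqrtr ?divfK ?gt_eqF // divr_ge0 // ltW.
  by rewrite expr2 !mulrA hnw mul1r.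
have hi : forall i : 'I_d,
    `|Rintegral P setT (fun t => pi (xf t) 0 i * h (xf t) 0 i)
      - Rintegral P setT (fun t => pi (xf t) 0 i * yf t 0 i)|
    <= 2 * Num.sqrt (alpha * M).
  move=> i.
  rewrite -RintegralB //; [|exact/bint/good_mul|exact/bint/good_mul].
  rewrite (eq_Rintegral _ (g := fun t => -1 * (pi (xf t) 0 i *
      (yf t 0 i - h (xf t) 0 i)))); last by move=> t _; ring.
  rewrite RintegralZl //; last by apply/bint/good_mul => //; exact: good_sub.
  rewrite normrM normrN1 mul1r.
  apply: le_trans (core (B := 2 * M) (alpha := alpha) (P := P) w0 hnw
    (fun k => (hsand k).2) hdis cov mtau (gp i) (good_sub (gy i) (gh i))
    (fun t => hOm _ (hpi (xf t)) i) _ _) _.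
  - move=> t; apply: le_trans (ler_normB _ _) _.
    by rewrite mulr2n mulrDl mul1r; apply: lerD; apply: hY.
  - move=> k.
    have := hcons [set x | tau k (pi x 0 i)] (ex_intro _ i (ex_intro _ k erefl)) i.
    rewrite /cond_exp.
    set A := xf @^-1` [set x | tau k (pi x 0 i)].
    have mA : measurable A.
      by rewrite /A -[_ @^-1` _]setTI; exact: ((gp i).1 measurableT _ (mtau k)).
    have -> : Rintegral P setT (fun t => (yf t 0 i - h (xf t) 0 i) *
        \1_((fun t => pi (xf t) 0 i) @^-1` tau k) t) =
        Rintegral P A (fun t => yf t 0 i - h (xf t) 0 i).
      by rewrite [RHS]Rintegral_mkcond patch_indic; apply: eq_Rintegral.
    rewrite /Rintegral.
    set r := fine _; set q := fine _ => H.
    have q0 : 0 <= q by rewrite /q fine_ge0 // measure_ge0.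
    have [qz|qn0] := eqVneq q 0.
      have PA0 : P A = 0%E.
        have hf : P A \is a fin_num.
          rewrite ge0_fin_numE ?measure_ge0 //.
          exact: le_lt_trans (probability_le1 P mA) (ltry 1).
        by rewrite -(fineK hf) -/q qz.
      rewrite /r null_set_integral //= ?normr0 ?ltW //.
      apply/measurable_realfun.measurable_EFinP.
      apply: measurable_funS (good_sub (gy i) (gh i)).1 => //.
    have qp : 0 < q by rewrite lt0r qn0.
    by move: H; rewrite normrM normfV (ger0_norm q0) ler_pM2r ?invr_gt0.
  - rewrite e2 e1; lra.
rewrite /dotv.
rewrite (@Rint_EFin _ _ _ P (fun t => \sum_(i < d) pi (xf t) 0 i * h (xf t) 0 i)); last first.
  by apply: good_sum => i; exact: good_mul.
rewrite (@Rint_EFin _ _ _ P (fun t => \sum_(i < d) pi (xf t) 0 i * yf t 0 i)); last first.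
  by apply: good_sum => i; exact: good_mul.
rewrite -EFinB abse_EFin lee_fin.
rewrite !Rint_sum; [|by move=> i; exact: good_mul|by move=> i; exact: good_mul].
rewrite -sumrB; apply: le_trans (ler_norm_sum _ _ _) _.
apply: le_trans (ler_sum _ (fun i _ => hi i)) _.
rewrite sumr_const card_ord -mulr_natr; lra.
Qed.
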